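(* Let $(T,(V_t)_{t\in T})$ be a lean tree-decomposition of a graph $H$ into finite parts, and root $T$ at an arbitrary node $r$. Then every rooted ray in $T$ arises from at most one end of $H$. Moreover, if a rooted ray $R$ in $T$ arises from an end $\varepsilon$ of $H$, then $\liminf_{e\in E(R)}V_e=\mathrm{Dom}(\varepsilon)$.
   Context: A tree-decomposition $(T,(V_t)_{t\in T})$ of $H$ consists of a tree $T$ and bags $V_t\subseteq V(H)$ covering all vertices and edges of $H$ such that for each vertex $v$ the nodes $t$ with $v\in V_t$ form a subtree; it is into finite parts if all bags are finite. For an edge $e=st$ of $T$, $V_e:=V_s\cap V_t$. The decomposition is lean if for every two (not necessarily distinct) nodes $s,t$ and all $Z_s\subseteq V_s$, $Z_t\subseteq V_t$ with $|Z_s|=|Z_t|=:\ell\in\mathbb N$, either $H$ contains $\ell$ pairwise disjoint $Z_s$–$Z_t$ paths or some edge $e$ of the $s$–$t$ path in $T$ has $|V_e|<\ell$. With $T$ rooted at $r$, $\le_T$ is the tree-order, a rooted ray is a ray in $T$ starting at $r$, and for an edge $e$, $T_e$ is the component of $T-e$ not containing $r$ and $H\mathring{\uparrow}e$ is the subgraph of $H$ induced on $\bigcup_{u\in T_e}V_u\setminus V_e$. An end of $H$ is an equivalence class of rays, two rays being equivalent if for every finite $X\subseteq V(H)$ they have tails in the same component of $H-X$. If $X\subseteq V(H)$ meets every ray of an end $\varepsilon$ in only finitely many vertices, $C_H(X,\varepsilon)$ denotes the unique component of $H-X$ containing a tail of every ray in $\varepsilon$. An end $\varepsilon$ gives rise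 to (i.e. the ray arises from $\varepsilon$) the rooted ray $R$ in $T$ if every ray in $\varepsilon$ meets every bag $V_t$ with $t\in R$ in only finitely many vertices, and for every edge $e=st$ of $R$ with $s<_T t$ we have $C_H(V_s,\varepsilon)\subseteq H\mathring{\uparrow}e$. A vertex $v$ dominates $\varepsilon$ if $v\in C_H(X,\varepsilon)$ for every finite $X\subseteq V(H)\setminus\{v\}$; $\mathrm{Dom}(\varepsilon)$ is the set of vertices dominating $\varepsilon$. For a ray $R=t_0e_0t_1e_1\dots$ in $T$, $\liminf_{e\in E(R)}V_e:=\bigcup_{n\in\mathbb N}\bigcap_{i\ge n}V_{e_i}$. *)

(* Defs.v *)
From Stdlib Require Import List Arith.
Import ListNotations.
Set Implicit Arguments.

Fixpoint chain {V : Type} (adj : V -> V -> Prop) (P : list V) : Prop :=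
  match P with
  | [] => True
  | x :: Q => match Q with
              | [] => True
              | y :: _ => adj x y /\ chain adj Q
              end
  end.

Definition is_path {V : Type} (adj : V -> V -> Prop) (P : list V) (a b : V) : Prop :=
  NoDup P /\ chain adj P /\ hd_error P = Some a /\ last P a = b.

Definition finite_set {V : Type} (X : V -> Prop) : Prop :=
  exists L : list V, forall x, X x -> In x L.

(* |X| < l (for a possibly infinite set X: false if X is infinite) *)
Definition card_lt {V : Type} (X : V -> Prop) (l : nat) : Prop :=
  exists L : list V, length L < l /\ forall x, X x -> In x L.

Definition is_ray {V : Type} (adj : V -> V -> Prop) (R : nat -> V) : Prop :=
  (forall i j, R i = R j -> i = j) /\ forall n, adj (R n) (R (S n)).

Definition AB_path {V : Type} (adj : V -> V -> Prop) (A B : V -> Prop) (P : list V) : Prop :=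
  exists a b, is_path adj P a b /\ A a /\ B b /\
    (forall x, In x P -> A x -> x = a) /\ (forall x, In x P -> B x -> x = b).

Definition symmetric_rel {V : Type} (adj : V -> V -> Prop) : Prop :=
  forall x y, adj x y -> adj y x.
Definition irreflexive_rel {V : Type} (adj : V -> V -> Prop) : Prop :=
  forall x, ~ adj x x.

Definition is_tree {N : Type} (tadj : N -> N -> Prop) : Prop :=
  symmetric_rel tadj /\ irreflexive_rel tadj /\
  forall s t, exists P, is_path tadj P s t /\ forall P', is_path tadj P' s t -> P' = P.

Definition tree_decomposition {V N : Type} (adj : V -> V -> Prop) (tadj : N -> N -> Prop)
  (bag : N -> V -> Prop) : Prop :=
  is_tree tadj /\
  (forall v, exists t, bag t v) /\
  (forall u v, adj u v -> exists t, bag t u /\ bag t v) /\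
  (forall s t P u v, is_path tadj P s t -> In u P -> bag s v -> bag t v -> bag u v).

Definition finite_parts {V N : Type} (bag : N -> V -> Prop) : Prop :=
  forall t, finite_set (bag t).

(* V_e for the edge e = st *)
Definition adhesion {V N : Type} (bag : N -> V -> Prop) (s t : N) (v : V) : Prop :=
  bag s v /\ bag t v.

Definition lean {V N : Type} (adj : V -> V -> Prop) (tadj : N -> N -> Prop)
  (bag : N -> V -> Prop) : Prop :=
  forall (s t : N) (Zs Zt : list V) (l : nat),
    NoDup Zs -> NoDup Zt -> length Zs = l -> length Zt = l ->
    (forall z, In z Zs -> bag s z) -> (forall z, In z Zt -> bag t z) ->
    (exists Ps : nat -> list V,
        (forall i, i < l -> AB_path adj (fun x => In x Zs) (fun x => In x Zt) (Ps i)) /\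
        (forall i j x, i < l -> j < l -> i <> j -> In x (Ps i) -> ~ In x (Ps j)))
    \/
    (forall P, is_path tadj P s t ->
       exists k a b, nth_error P k = Some a /\ nth_error P (S k) = Some b /\
                     card_lt (adhesion bag a b) l).

Definition tle {N : Type} (tadj : N -> N -> Prop) (r s t : N) : Prop :=
  exists P, is_path tadj P r t /\ In s P.

Definition rooted_ray {N : Type} (tadj : N -> N -> Prop) (r : N) (R : nat -> N) : Prop :=
  is_ray tadj R /\ R 0 = r.

Definition reach {V : Type} (adj : V -> V -> Prop) (X : V -> Prop) (a b : V) : Prop :=
  exists P, is_path adj P a b /\ forall x, In x P -> ~ X x.

Definition ray_equiv {V : Type} (adj : V -> V -> Prop) (R1 R2 : nat -> V) : Prop :=
  forall X : list V, exists n m,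
    (forall k, n <= k -> ~ In (R1 k) X) /\ (forall k, m <= k -> ~ In (R2 k) X) /\
    reach adj (fun x => In x X) (R1 n) (R2 m).

Definition is_end {V : Type} (adj : V -> V -> Prop) (E : (nat -> V) -> Prop) : Prop :=
  exists R0, is_ray adj R0 /\ forall R, E R <-> (is_ray adj R /\ ray_equiv adj R R0).

(* v lies in C_H(X, E): the component of H - X containing a tail of every ray of E *)
Definition compC {V : Type} (adj : V -> V -> Prop) (X : V -> Prop)
  (E : (nat -> V) -> Prop) (v : V) : Prop :=
  ~ X v /\ forall R, E R -> exists n, (forall k, n <= k -> ~ X (R k)) /\ reach adj X v (R n).

Definition dominates {V : Type} (adj : V -> V -> Prop) (E : (nat -> V) -> Prop) (v : V) : Prop :=
  forall X : list V, ~ In v X -> compC adj (fun x => In x X) E v.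

(* v is a vertex of H ↑̊ e for the edge e = st, s <_T t *)
Definition up_part {V N : Type} (tadj : N -> N -> Prop) (r : N) (bag : N -> V -> Prop)
  (s t : N) (v : V) : Prop :=
  (exists u, tle tadj r t u /\ bag u v) /\ ~ adhesion bag s t v.

Definition arises {V N : Type} (adj : V -> V -> Prop) (tadj : N -> N -> Prop) (r : N)
  (bag : N -> V -> Prop) (E : (nat -> V) -> Prop) (R : nat -> N) : Prop :=
  (forall R', E R' -> forall n, finite_set (fun x => bag (R n) x /\ exists k, R' k = x)) /\
  (forall n v, compC adj (bag (R n)) E v -> up_part tadj r bag (R n) (R (S n)) v).

Definition liminf_adh {V N : Type} (bag : N -> V -> Prop) (R : nat -> N) (v : V) : Prop :=
  exists n, forall i, n <= i -> adhesion bag (R i) (R (S i)) v.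

(* Main.v *)
Require Import Defs.
From Stdlib Require Import List Arith Lia Classical.
Import ListNotations.



Inductive conn {V : Type} (adj : V -> V -> Prop) (X : V -> Prop) : V -> V -> Prop :=
| conn_refl a : ~ X a -> conn adj X a a
| conn_step a b c : ~ X a -> adj a b -> conn adj X b c -> conn adj X a c.


Lemma conn_l {V} (adj : V -> V -> Prop) X a b : conn adj X a b -> ~ X a.
Proof. intros H; destruct H; auto. Qed.

Lemma conn_r {V} (adj : V -> V -> Prop) X a b : conn adj X a b -> ~ X b.
Proof. intros H; induction H; auto. Qed.

Lemma conn_trans {V} (adj : V -> V -> Prop) X a b c :
  conn adj X a b -> conn adj X b c -> conn adj X a c.
Proof. intros H; induction H; intros; auto. eapply conn_step; eauto. Qed.

Lemma conn_snoc {V} (adj : V -> V -> Prop) X a b c :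
  conn adj X a b -> adj b c -> ~ X c -> conn adj X a c.
Proof.
  intros H; induction H; intros.
  - eapply conn_step; eauto. apply conn_refl; auto.
  - eapply conn_step; eauto.
Qed.

Lemma conn_sym {V} (adj : V -> V -> Prop) X a b :
  symmetric_rel adj -> conn adj X a b -> conn adj X b a.
Proof.
  intros Hs H; induction H.
  - apply conn_refl; auto.
  - eapply conn_snoc; eauto.
Qed.

Lemma conn_mono {V} (adj : V -> V -> Prop) (X Y : V -> Prop) a b :
  conn adj Y a b -> (forall z, X z -> Y z) -> conn adj X a b.
Proof.
  intros H; induction H; intros.
  - apply conn_refl; auto.
  - eapply conn_step; eauto.
Qed.

Lemma conn_pred {V} (adj : V -> V -> Prop) (X Y : V -> Prop) a b :
  conn adj X a b -> (forall z, conn adj X a z -> ~ Y z) -> conn adj Y a b.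
Proof.
  intros H; induction H; intros HY.
  - apply conn_refl; apply HY; apply conn_refl; auto.
  - eapply conn_step; eauto.
    + apply HY; apply conn_refl; auto.
    + apply IHconn. intros z Hz. apply HY. eapply conn_step; eauto.
Qed.

Lemma conn_cross {V} (adj : V -> V -> Prop) (X Pr : V -> Prop) a b :
  conn adj X a b -> ~ Pr a -> Pr b ->
  exists p q, ~ X p /\ adj p q /\ ~ Pr p /\ Pr q.
Proof.
  intros H; induction H; intros.
  - contradiction.
  - destruct (classic (Pr b)).
    + exists a, b; auto.
    + auto.
Qed.

Lemma last_indep {A} (x : A) l d d' : last (x :: l) d = last (x :: l) d'.
Proof. revert x; induction l; intros; [reflexivity|]. change (last (a :: l) d = last (a :: l) d'). apply IHl. Qed.

Lemma chain_app_r {A} (R : A -> A -> Prop) l1 l2 : chain R (l1 ++ l2) -> chain R l2.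
Proof.
  induction l1; simpl; auto.
  intros H. apply IHl1. destruct l1; simpl in *.
  - destruct l2; auto. tauto.
  - tauto.
Qed.

Lemma chain_app_l {A} (R : A -> A -> Prop) l1 l2 : chain R (l1 ++ l2) -> chain R l1.
Proof.
  induction l1; simpl; auto.
  intros H. destruct l1; simpl in *; auto.
  split; [tauto|]. apply IHl1. tauto.
Qed.

Lemma last_app_cons {A} (l1 l2 : list A) x d d' :
  last (l1 ++ x :: l2) d = last (x :: l2) d'.
Proof.
  induction l1; simpl.
  - apply last_indep.
  - rewrite IHl1. destruct l1; simpl; auto.
Qed.

Lemma path_conn {V} (adj : V -> V -> Prop) (X : V -> Prop) P a b :
  chain adj P -> hd_error P = Some a -> last P a = b ->
  (forall x, In x P -> ~ X x) -> conn adj X a b.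
Proof.
  revert a; induction P as [|x P IH]; intros a Hc Hh Hl HX; simpl in *.
  - discriminate.
  - inversion Hh; subst x. destruct P as [|y P].
    + subst b. apply conn_refl. auto.
    + destruct Hc as [Hxy Hc]. eapply conn_step; eauto.
      apply IH; simpl; auto.
      rewrite <- Hl. apply last_indep.
Qed.

Lemma reach_conn {V} (adj : V -> V -> Prop) X a b : reach adj X a b -> conn adj X a b.
Proof.
  intros [P [[Hn [Hc [Hh Hl]]] HX]]. eapply path_conn; eauto.
Qed.

Lemma reach_prepend {V} (adj : V -> V -> Prop) (X : V -> Prop) a b c :
  ~ X a -> adj a b -> reach adj X b c -> reach adj X a c.
Proof.
  intros Ha Hab [Q [[Hn [Hc [Hh Hl]]] HX]].
  destruct Q as [|b' Q]; simpl in Hh; [discriminate|]. inversion Hh; subst b'.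
  destruct (classic (In a (b :: Q))) as [Hin|Hin].
  - destruct (in_split _ _ Hin) as [l1 [l2 E]].
    exists (a :: l2). split; [split; [|split; [|split]]|].
    + rewrite E in Hn. eapply NoDup_app_remove_l; eauto.
    + rewrite E in Hc. eapply chain_app_r; eauto.
    + reflexivity.
    + rewrite <- Hl. rewrite E. symmetry. apply last_app_cons.
    + intros x Hx. apply HX. rewrite E. apply in_or_app. right. exact Hx.
  - exists (a :: b :: Q). split; [split; [|split; [|split]]|].
    + constructor; auto.
    + simpl. split; auto.
    + reflexivity.
    + rewrite <- Hl. simpl. apply last_indep.
    + intros x [Hx|Hx]; [subst; auto| apply HX; auto].
Qed.

Lemma conn_reach {V} (adj : V -> V -> Prop) X a b : conn adj X a b -> reach adj X a b.
Proof.
  intros H; induction H.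
  - exists [a]. split; [split; [|split; [|split]]|]; simpl; auto.
    + constructor; auto. constructor.
    + intros x [Hx|[]]; subst; auto.
  - eapply reach_prepend; eauto.
Qed.

Lemma ray_seg {V} (adj : V -> V -> Prop) (X : V -> Prop) (P : nat -> V) i j :
  (forall n, adj (P n) (P (S n))) -> i <= j ->
  (forall k, i <= k -> k <= j -> ~ X (P k)) -> conn adj X (P i) (P j).
Proof.
  intros Hadj Hij. induction Hij; intros HX.
  - apply conn_refl. apply HX; lia.
  - eapply conn_snoc. apply IHHij. intros; apply HX; lia. apply Hadj. apply HX; lia.
Qed.

Lemma ray_seg2 {V} (adj : V -> V -> Prop) (X : V -> Prop) (P : nat -> V) i j :
  symmetric_rel adj -> (forall n, adj (P n) (P (S n))) ->
  (forall k, Nat.min i j <= k -> k <= Nat.max i j -> ~ X (P k)) -> conn adj X (P i) (P j).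
Proof.
  intros Hs Hadj HX. destruct (le_lt_dec i j).
  - apply ray_seg; auto. intros; apply HX; lia.
  - apply conn_sym; auto. apply ray_seg; auto; try lia. intros; apply HX; lia.
Qed.


Lemma path_unique {N} {tadj : N -> N -> Prop} {P} {P'} {s} {t} :
  is_tree tadj -> is_path tadj P s t -> is_path tadj P' s t -> P = P'.
Proof.
  intros [_ [_ Ht]] H1 H2. destruct (Ht s t) as [Q [_ HQ]].
  rewrite (HQ _ H1), (HQ _ H2). reflexivity.
Qed.

Lemma NoDup_map_inj {A B} {f : A -> B} {l} :
  (forall x y, f x = f y -> x = y) -> NoDup l -> NoDup (map f l).
Proof.
  intros Hf Hn; induction Hn; simpl; constructor; auto.
  intros Hin. apply in_map_iff in Hin as [y [Hy Hy']]. apply Hf in Hy; subst; auto.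
Qed.

Lemma chain_map_seq {N} {tadj : N -> N -> Prop} {R : nat -> N} {a} {len} :
  (forall n, tadj (R n) (R (S n))) -> chain tadj (map R (seq a len)).
Proof.
  intros H. revert a; induction len; intros a; simpl; auto.
  destruct len; simpl; auto. split; auto. apply (IHlen (S a)).
Qed.

Lemma segpath {N} {tadj : N -> N -> Prop} {R : nat -> N} {a} {len} :
  is_ray tadj R -> is_path tadj (map R (seq a (S len))) (R a) (R (a + len)).
Proof.
  intros [Hinj Hadj]. split; [|split; [|split]].
  - apply NoDup_map_inj; auto. apply seq_NoDup.
  - apply chain_map_seq; auto.
  - reflexivity.
  - rewrite seq_S, map_app. apply last_last.
Qed.

Lemma Rpath {N} {tadj : N -> N -> Prop} {r} {R : nat -> N} {n} :
  rooted_ray tadj r R -> is_path tadj (map R (seq 0 (S n))) r (R n).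
Proof.
  intros [Hr H0]. pose proof (@segpath _ _ _ 0 n Hr) as H. rewrite H0 in H. exact H.
Qed.

Lemma prefix_path {N} {tadj : N -> N -> Prop} {P a b X q Y} :
  is_path tadj P a b -> P = X ++ q :: Y -> is_path tadj (X ++ [q]) a q.
Proof.
  intros [Hn [Hc [Hh Hl]]] E; subst P. split; [|split; [|split]].
  - apply NoDup_app_remove_r with (l' := Y).
    rewrite <- app_assoc. exact Hn.
  - apply chain_app_l with (l2 := Y). rewrite <- app_assoc. exact Hc.
  - destruct X; simpl in *; auto.
  - apply last_last.
Qed.

Lemma suffix_path {N} {tadj : N -> N -> Prop} {P a b X q Y} :
  is_path tadj P a b -> P = X ++ q :: Y -> is_path tadj (q :: Y) q b.
Proof.
  intros [Hn [Hc [Hh Hl]]] E; subst P. split; [|split; [|split]].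
  - eapply NoDup_app_remove_l; eauto.
  - eapply chain_app_r; eauto.
  - reflexivity.
  - rewrite <- Hl. symmetry. apply last_app_cons.
Qed.

Lemma NoDup_snoc {A} (l : list A) x : NoDup l -> ~ In x l -> NoDup (l ++ [x]).
Proof.
  induction 1; simpl; intros.
  - constructor; auto. constructor.
  - constructor; auto. rewrite in_app_iff. simpl. intuition.
Qed.

Lemma chain_snoc {A} {Rl : A -> A -> Prop} {l} {x} {d} :
  l <> [] -> chain Rl l -> Rl (last l d) x -> chain Rl (l ++ [x]).
Proof.
  induction l as [|a l IH]; intros Hne Hc Hl; [congruence|].
  destruct l as [|b l].
  - simpl in *. auto.
  - simpl in Hc. destruct Hc as [Hab Hc]. 
    change (chain Rl (a :: (b :: l) ++ [x])). simpl. split; auto.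
    apply IH; auto. congruence.
Qed.

Definition above {N} (tadj : N -> N -> Prop) r (R : nat -> N) n u := tle tadj r (R (S n)) u.

Lemma above_path {N} {tadj : N -> N -> Prop} {r} {R : nat -> N} {n} {u} {P} :
  is_tree tadj -> above tadj r R n u -> is_path tadj P r u -> In (R (S n)) P.
Proof.
  intros Ht [Q [HQ Hin]] HP. rewrite (path_unique Ht HP HQ). exact Hin.
Qed.

Lemma above_prefix {N} {tadj : N -> N -> Prop} {r} {R : nat -> N} {n} {P} {u} :
  is_tree tadj -> rooted_ray tadj r R -> is_path tadj P r u -> In (R n) P ->
  exists Y, P = map R (seq 0 (S n)) ++ Y.
Proof.
  intros Ht HR HP Hin. destruct (in_split _ _ Hin) as [X [Y E]].
  pose proof (prefix_path HP E) as H1.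
  pose proof (@Rpath _ _ _ _ n HR) as H2.
  pose proof (path_unique Ht H1 H2) as Heq. exists Y. rewrite E, <- Heq, <- app_assoc. reflexivity.
Qed.

Lemma In_map_seq {N} {R : nat -> N} {a} {len} {m} :
  (forall x y, R x = R y -> x = y) -> In (R m) (map R (seq a len)) <-> a <= m < a + len.
Proof.
  intros Hinj. rewrite in_map_iff. split.
  - intros [x [Hx Hin]]. apply Hinj in Hx. subst. apply in_seq in Hin. exact Hin.
  - intros H. exists m. split; auto. apply in_seq. exact H.
Qed.

Lemma above_mono {N} {tadj : N -> N -> Prop} {r} {R : nat -> N} {n} {m} {u} :
  is_tree tadj -> rooted_ray tadj r R -> above tadj r R m u -> n <= m -> above tadj r R n u.
Proof.
  intros Ht HR [P [HP Hin]] Hnm.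
  destruct (above_prefix Ht HR HP Hin) as [Y E].
  exists P. split; auto. rewrite E. apply in_or_app. left.
  apply In_map_seq. apply (proj1 HR). lia.
Qed.

Lemma above_R {N} {tadj : N -> N -> Prop} {r} {R : nat -> N} {n} {m} :
  is_tree tadj -> rooted_ray tadj r R -> (above tadj r R n (R m) <-> n < m).
Proof.
  intros Ht HR. split.
  - intros Ha. pose proof (above_path Ht Ha (@Rpath _ _ _ _ m HR)) as H.
    apply In_map_seq in H; [lia|]. apply (proj1 (proj1 HR)).
  - intros H. exists (map R (seq 0 (S m))). split; [apply Rpath; auto|].
    apply In_map_seq; [apply (proj1 (proj1 HR))|]. lia.
Qed.

Lemma above_len {N} {tadj : N -> N -> Prop} {r} {R : nat -> N} {n} {u} {P} :
  is_tree tadj -> rooted_ray tadj r R -> above tadj r R n u -> is_path tadj P r u ->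
  S (S n) <= length P.
Proof.
  intros Ht HR Ha HP. pose proof (above_path Ht Ha HP) as Hin.
  destruct (above_prefix Ht HR HP Hin) as [Y E]. rewrite E, length_app, length_map, length_seq. lia.
Qed.

Lemma edge_lemma {N} {tadj : N -> N -> Prop} {r} {R : nat -> N} {n} {p} {q} :
  is_tree tadj -> rooted_ray tadj r R -> tadj p q ->
  above tadj r R n p -> ~ above tadj r R n q -> p = R (S n) /\ q = R n.
Proof.
  intros Ht HR Hpq [Pp [HPp Hin]] Hq.
  destruct (classic (In q Pp)) as [Hq'|Hq'].
  - destruct (in_split _ _ Hq') as [X [Y E]].
    pose proof (prefix_path HPp E) as H1.
    assert (HnX : ~ In (R (S n)) (X ++ [q])) by (intros H; apply Hq; exists (X ++ [q]); auto).
    assert (HY : In (R (S n)) Y).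
    { rewrite E in Hin. apply in_app_or in Hin as [H|[H|H]]; auto;
      exfalso; apply HnX; apply in_or_app; [left; auto | right; left; auto]. }
    pose proof (suffix_path HPp E) as H2.
    assert (H3 : is_path tadj [q; p] q p).
    { destruct Ht as [Hs [Hirr _]]. split; [|split; [|split]]; simpl; auto.
      constructor; [|constructor; [auto|constructor]].
      intros [H|[]]. subst q. apply (Hirr p); auto. }
    pose proof (path_unique Ht H2 H3) as E2. inversion E2; subst Y.
    destruct HY as [HY|[]]. subst p. split; auto.
    pose proof (@Rpath _ _ _ _ (S n) HR) as H4. rewrite E in HPp.
    pose proof (path_unique Ht HPp H4) as E3.
    rewrite seq_S, seq_S, !map_app in E3. simpl in E3.
    replace (X ++ [q; R (S n)]) with ((X ++ [q]) ++ [R (S n)]) in E3 by (rewrite <- app_assoc; reflexivity).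
    apply app_inj_tail in E3 as [E3 _]. apply app_inj_tail in E3 as [_ E3]. auto.
  - exfalso. apply Hq. exists (Pp ++ [q]). split.
    + destruct HPp as [Hn [Hc [Hh Hl]]]. split; [|split; [|split]].
      * apply NoDup_snoc; auto.
      * apply (@chain_snoc _ _ _ _ r); auto. destruct Pp; simpl in *; congruence.
        rewrite Hl; auto.
      * destruct Pp; simpl in *; congruence.
      * apply last_last.
    + apply in_or_app; left; auto.
Qed.

Lemma cross_list {A} {Rl : A -> A -> Prop} {Pr : A -> Prop} {P} {a} :
  chain Rl P -> hd_error P = Some a -> Pr a -> ~ Pr (last P a) ->
  exists p q, In p P /\ In q P /\ Rl p q /\ Pr p /\ ~ Pr q.
Proof.
  revert a; induction P as [|x P IH]; intros a Hc Hh Ha Hl; simpl in Hh; [discriminate|].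
  inversion Hh; subst x. destruct P as [|y P].
  - simpl in Hl. contradiction.
  - destruct Hc as [Hay Hc]. destruct (classic (Pr y)) as [Hy|Hy].
    + destruct (IH y Hc eq_refl Hy) as [p [q [H1 [H2 H3]]]].
      * intros H. apply Hl. change (Pr (last (y :: P) a)). rewrite (last_indep y P a y). exact H.
      * exists p, q. simpl in *. intuition.
    + exists a, y. simpl. intuition.
Qed.

Lemma TL {V N} {adj : V -> V -> Prop} {tadj : N -> N -> Prop} {bag : N -> V -> Prop} {r} {R} {n} {u} {w} {x} :
  tree_decomposition adj tadj bag -> rooted_ray tadj r R ->
  bag u x -> bag w x -> above tadj r R n u -> ~ above tadj r R n w ->
  bag (R n) x /\ bag (R (S n)) x.
Proof.
  intros [Ht [_ [_ Hsub]]] HR Hu Hw Hau Haw.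
  destruct (proj2 (proj2 Ht) u w) as [Q [HQ _]].
  destruct HQ as [Hn [Hc [Hh Hl]]] eqn:HQ'.
  destruct (@cross_list _ _ (above tadj r R n) _ _ Hc Hh Hau) as [p [q [Hp [Hq [Hpq [Ha Hna]]]]]].
  { rewrite Hl; auto. }
  destruct (edge_lemma Ht HR Hpq Ha Hna) as [E1 E2]; subst p q.
  split; eapply Hsub; eauto.
Qed.


Definition Uset {V N} (tadj : N -> N -> Prop) r (bag : N -> V -> Prop) (R : nat -> N) n x :=
  up_part tadj r bag (R n) (R (S n)) x.
Definition Aset {V N} (bag : N -> V -> Prop) (R : nat -> N) n x :=
  adhesion bag (R n) (R (S n)) x.

Lemma F4 {V N} {adj : V -> V -> Prop} {tadj : N -> N -> Prop} {bag : N -> V -> Prop} {r R n x} :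
  tree_decomposition adj tadj bag -> rooted_ray tadj r R ->
  bag (R n) x -> ~ Uset tadj r bag R n x.
Proof.
  intros Htd HR Hb [[u [Hu Hbu]] HnA]. apply HnA.
  eapply (TL Htd HR Hbu Hb Hu). rewrite (above_R (proj1 Htd) HR). lia.
Qed.

Lemma F2 {V N} {adj : V -> V -> Prop} {tadj : N -> N -> Prop} {bag : N -> V -> Prop} {r R n v w} :
  tree_decomposition adj tadj bag -> rooted_ray tadj r R ->
  adj v w -> Uset tadj r bag R n w -> Uset tadj r bag R n v \/ Aset bag R n v.
Proof.
  intros Htd HR Hvw [[u' [Hu' Hbu']] HnA].
  destruct (proj1 (proj2 (proj2 Htd)) v w Hvw) as [u [Hv Hw]].
  destruct (classic (above tadj r R n u)) as [Ha|Ha].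
  - destruct (classic (Aset bag R n v)); auto. left. split; eauto.
  - exfalso. apply HnA. exact (TL Htd HR Hbu' Hw Hu' Ha).
Qed.

Lemma F5 {V N} {adj : V -> V -> Prop} {tadj : N -> N -> Prop} {bag : N -> V -> Prop} {r R n m x} :
  tree_decomposition adj tadj bag -> rooted_ray tadj r R ->
  n <= m -> Uset tadj r bag R m x -> Uset tadj r bag R n x.
Proof.
  intros Htd HR Hnm [[u [Hu Hbu]] HnA]. split.
  - exists u. split; auto. exact (above_mono (proj1 Htd) HR Hu Hnm).
  - intros [H1 H2]. destruct (Nat.eq_dec n m) as [->|Hne].
    + apply HnA. split; auto.
    + apply HnA. apply (TL Htd HR Hbu H2 Hu).
      rewrite (above_R (proj1 Htd) HR). lia.
Qed.

Lemma F3 {V N} {adj : V -> V -> Prop} {tadj : N -> N -> Prop} {bag : N -> V -> Prop} {r R} x :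
  tree_decomposition adj tadj bag -> rooted_ray tadj r R ->
  exists M, forall n, M <= n -> ~ Uset tadj r bag R n x.
Proof.
  intros Htd HR. destruct (proj1 (proj2 Htd) x) as [u0 Hu0].
  destruct (proj2 (proj2 (proj1 Htd)) r u0) as [P0 [HP0 _]].
  exists (length P0). intros n Hn [[u [Hu Hbu]] HnA]. apply HnA.
  apply (TL Htd HR Hbu Hu0 Hu). intros Ha.
  pose proof (above_len (proj1 Htd) HR Ha HP0). lia.
Qed.

Lemma F3L {V N} {adj : V -> V -> Prop} {tadj : N -> N -> Prop} {bag : N -> V -> Prop} {r R} (L : list V) :
  tree_decomposition adj tadj bag -> rooted_ray tadj r R ->
  exists M, forall x, In x L -> forall n, M <= n -> ~ Uset tadj r bag R n x.
Proof.
  intros Htd HR. induction L as [|a L IH].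
  - exists 0. intros x [].
  - destruct IH as [M HM]. destruct (@F3 _ _ _ _ _ _ _ a Htd HR) as [Ma HMa].
    exists (Nat.max M Ma). intros x [->|Hx] n Hn.
    + apply HMa; lia.
    + apply HM; auto; lia.
Qed.

Lemma ev_avoid {V} (P : nat -> V) (L : list V) :
  (forall i j, P i = P j -> i = j) -> exists K, forall k, K <= k -> ~ In (P k) L.
Proof.
  intros Hinj. induction L as [|a L IH].
  - exists 0. intros k _ [].
  - destruct IH as [K HK]. destruct (classic (exists i, P i = a)) as [[i Hi]|Hno].
    + exists (Nat.max K (S i)). intros k Hk [Hin|Hin].
      * rewrite <- Hi in Hin. apply Hinj in Hin. lia.
      * apply (HK k); auto; lia.
    + exists K. intros k Hk [Hin|Hin].
      * apply Hno. exists k; auto.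
      * apply (HK k); auto.
Qed.

Lemma ray_equiv_refl {V} (adj : V -> V -> Prop) P : is_ray adj P -> ray_equiv adj P P.
Proof.
  intros [Hinj Hadj] X. destruct (ev_avoid P X Hinj) as [K HK].
  exists K. exists K. split; [exact HK|split; [exact HK|]].
  apply conn_reach. apply conn_refl. apply HK; auto.
Qed.

Lemma ray_equiv_sym {V} (adj : V -> V -> Prop) P Q :
  symmetric_rel adj -> ray_equiv adj P Q -> ray_equiv adj Q P.
Proof.
  intros Hs H X. destruct (H X) as [n [m [H1 [H2 H3]]]].
  exists m, n. split; [|split]; auto. apply conn_reach. apply conn_sym; auto. apply reach_conn; auto.
Qed.

Lemma ray_equiv_trans {V} (adj : V -> V -> Prop) P Q S :
  symmetric_rel adj -> is_ray adj Q -> ray_equiv adj P Q -> ray_equiv adj Q S -> ray_equiv adj P S.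
Proof.
  intros Hs [Hinj Hadj] H1 H2 X.
  destruct (H1 X) as [n1 [m1 [A1 [B1 C1]]]].
  destruct (H2 X) as [m2 [s2 [A2 [B2 C2]]]].
  exists n1, s2. split; [|split]; auto. apply conn_reach.
  eapply conn_trans. apply reach_conn; eauto.
  eapply conn_trans; [|apply reach_conn; eauto].
  apply ray_seg2; auto. intros k Hk1 Hk2.
  destruct (le_lt_dec m1 m2); [apply B1|apply A2]; lia.
Qed.

Lemma end_ray {V} {adj : V -> V -> Prop} {E P} : is_end adj E -> E P -> is_ray adj P.
Proof. intros [R0 [_ HE]] HP. apply HE in HP. tauto. Qed.

Lemma end_equiv {V} {adj : V -> V -> Prop} {E P Q} :
  symmetric_rel adj -> is_end adj E -> E P -> E Q -> ray_equiv adj P Q.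
Proof.
  intros Hs [R0 [HR0 HE]] HP HQ. apply HE in HP. apply HE in HQ.
  apply (ray_equiv_trans adj P R0 Q Hs HR0); [tauto|]. apply ray_equiv_sym; tauto.
Qed.

Definition CC {V} (adj : V -> V -> Prop) (X : V -> Prop) (E : (nat -> V) -> Prop) v :=
  ~ X v /\ forall P, E P -> exists n, (forall k, n <= k -> ~ X (P k)) /\ conn adj X v (P n).

Lemma CC_compC {V} {adj : V -> V -> Prop} {X E v} : CC adj X E v -> compC adj X E v.
Proof.
  intros [H1 H2]. split; auto. intros P HP. destruct (H2 P HP) as [n [A B]].
  exists n; split; auto. apply conn_reach; auto.
Qed.

Lemma compC_CC {V} {adj : V -> V -> Prop} {X E v} : compC adj X E v -> CC adj X E v.
Proof.
  intros [H1 H2]. split; auto. intros P HP. destruct (H2 P HP) as [n [A B]].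
  exists n; split; auto. apply reach_conn; auto.
Qed.

Lemma CC_conn {V} {adj : V -> V -> Prop} {X E y z} :
  symmetric_rel adj -> CC adj X E y -> conn adj X y z -> CC adj X E z.
Proof.
  intros Hs [H1 H2] Hc. split; [exact (conn_r _ _ _ _ Hc)|].
  intros P HP. destruct (H2 P HP) as [n [A B]]. exists n. split; auto.
  eapply conn_trans; [apply conn_sym; eauto|]; auto.
Qed.

Lemma CC_adj {V} {adj : V -> V -> Prop} {X E y z} :
  symmetric_rel adj -> CC adj X E y -> adj z y -> ~ X z -> CC adj X E z.
Proof.
  intros Hs Hy Hzy Hz. eapply CC_conn; eauto. apply conn_sym; auto.
  eapply conn_step; eauto. apply conn_refl. exact (proj1 Hy).
Qed.

Lemma CC_transfer {V} {adj : V -> V -> Prop} {X Y : V -> Prop} {E x} :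
  symmetric_rel adj -> is_end adj E -> CC adj X E x ->
  (forall z, CC adj X E z -> ~ Y z) -> CC adj Y E x.
Proof.
  intros Hs He Hx HY. split; [apply HY; auto|].
  intros P HP. destruct (proj2 Hx P HP) as [n [A B]]. exists n. split.
  - intros k Hk. apply HY. eapply CC_conn; eauto. eapply conn_trans; eauto.
    apply ray_seg; [apply (end_ray He HP)|lia|]. intros; apply A; lia.
  - apply conn_pred with (X := X); auto. intros z Hz. apply HY. eapply CC_conn; eauto.
Qed.

Lemma tail_CC {V} {adj : V -> V -> Prop} {X : V -> Prop} {E P} (LX : list V) :
  symmetric_rel adj -> is_end adj E -> E P -> (forall x, X x -> In x LX) ->
  (exists K, forall k, K <= k -> ~ X (P k)) ->
  exists K, forall k, K <= k -> CC adj X E (P k).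
Proof.
  intros Hs He HP HLX [K HK]. exists K. intros k Hk. split; [apply HK; auto|].
  intros Q HQ. destruct (end_equiv Hs He HP HQ LX) as [n1 [n2 [A1 [A2 C]]]].
  exists n2. split; [intros j Hj Hx; apply (A2 j Hj); auto|].
  eapply conn_trans; [|apply conn_mono with (Y := fun x => In x LX); [apply reach_conn; eauto|auto]].
  apply ray_seg2; auto. apply (end_ray He HP).
  intros j Hj1 Hj2. destruct (le_lt_dec K j).
  - apply HK; auto.
  - intros Hx. apply (A1 j); [lia|auto].
Qed.


Lemma enum_fin {V} (P : V -> Prop) :
  finite_set P -> exists L, NoDup L /\ forall x, In x L <-> P x.
Proof.
  intros [L0 H0]. revert P H0. induction L0 as [|a L0 IH]; intros P H0.
  - exists []. split; [constructor|]. intros x; split; [intros []|intros Hx; apply (H0 x Hx)].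
  - destruct (IH (fun x => P x /\ x <> a)) as [L [HL1 HL2]].
    { intros x [Hx Hne]. destruct (H0 x Hx); auto. congruence. }
    destruct (classic (P a)) as [Ha|Ha].
    + exists (a :: L). split.
      * constructor; auto. intros Hin. apply HL2 in Hin. tauto.
      * intros x. simpl. rewrite HL2. split; [intros [<-|[]]; auto|].
        intros Hx. destruct (classic (a = x)); auto.
    + exists L. split; auto. intros x. rewrite HL2. split; [tauto|].
      intros Hx; split; auto. intros ->; auto.
Qed.

Lemma take_sub {A} (L : list A) mu :
  mu <= length L -> NoDup L -> exists L', NoDup L' /\ length L' = mu /\ incl L' L.
Proof.
  revert mu; induction L as [|a L IH]; intros mu Hmu Hn.
  - exists []. simpl in Hmu. split; [constructor|split; [simpl; lia|intros x []]].
  - destruct mu as [|mu].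
    + exists []. split; [constructor|split; [reflexivity|intros x []]].
    + inversion Hn; subst. destruct (IH mu) as [L' [G1 [G2 G3]]]; [simpl in Hmu; lia|auto|].
      exists (a :: L'). split; [constructor; auto|split; [simpl; lia|]].
      intros x [<-|Hx]; [left; auto|right; auto].
Qed.

Lemma min_nat (Q : nat -> Prop) k : Q k -> exists m, Q m /\ forall j, Q j -> m <= j.
Proof.
  induction k as [k IH] using lt_wf_ind. intros Hk.
  destruct (classic (exists j, j < k /\ Q j)) as [[j [Hj HQ]]|Hno].
  - apply (IH j Hj HQ).
  - exists k. split; auto. intros j Hj. destruct (le_lt_dec k j); auto. exfalso; eauto.
Qed.

Lemma last_index (Q : nat -> Prop) K : forall I, ~ Q I -> (forall k, K <= k -> Q k) ->
  exists i, I <= i /\ ~ Q i /\ forall k, i < k -> Q k.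
Proof.
  induction K as [|K IH]; intros I HI HK.
  - exfalso. apply HI. apply HK. lia.
  - destruct (classic (Q K)) as [HQ|HQ].
    + apply IH; auto. intros k Hk. destruct (Nat.eq_dec k K); [subst; auto|apply HK; lia].
    + exists K. split; [|split; [exact HQ|]].
      * destruct (le_lt_dec I K); auto. exfalso. apply HI. apply HK. lia.
      * intros k Hk. apply HK. lia.
Qed.

Lemma NoDup_map_seq {A} (f : nat -> A) a len :
  (forall i j, a <= i < a + len -> a <= j < a + len -> f i = f j -> i = j) ->
  NoDup (map f (seq a len)).
Proof.
  revert a; induction len as [|len IH]; intros a Hf; simpl; constructor.
  - intros Hin. apply in_map_iff in Hin as [j [Hj Hin]]. apply in_seq in Hin.
    apply Hf in Hj; lia.
  - apply IH. intros i j Hi Hj. apply Hf; lia.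
Qed.

Lemma nth_map_seq {N} (R : nat -> N) a len k x :
  nth_error (map R (seq a len)) k = Some x -> x = R (a + k).
Proof.
  rewrite nth_error_map, nth_error_seq. destruct (Nat.ltb k len); simpl; intros H; inversion H; auto.
Qed.


Definition Nb {V N} (adj : V -> V -> Prop) (bag : N -> V -> Prop) E (R : nat -> N) b x :=
  bag (R b) x /\ exists y, CC adj (bag (R b)) E y /\ adj x y.

Lemma CC_U {V N} {adj : V -> V -> Prop} {tadj : N -> N -> Prop} {bag : N -> V -> Prop} {r R E b x} :
  arises adj tadj r bag E R -> CC adj (bag (R b)) E x -> Uset tadj r bag R b x.
Proof. intros Har H. apply (proj2 Har). apply CC_compC. exact H. Qed.

Lemma CC_mono {V N} {adj : V -> V -> Prop} {tadj : N -> N -> Prop} {bag : N -> V -> Prop} {r R E j j' x} :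
  symmetric_rel adj -> tree_decomposition adj tadj bag -> rooted_ray tadj r R ->
  is_end adj E -> arises adj tadj r bag E R ->
  j <= j' -> CC adj (bag (R j')) E x -> CC adj (bag (R j)) E x.
Proof.
  intros Hs Htd HR He Har Hj Hx. apply (CC_transfer Hs He Hx).
  intros z Hz Hb. apply (F4 Htd HR Hb). apply (F5 Htd HR Hj). exact (CC_U Har Hz).
Qed.

Lemma ray_tail_C {V N} {adj : V -> V -> Prop} {tadj : N -> N -> Prop} {bag : N -> V -> Prop} {r R E P} b :
  symmetric_rel adj -> finite_parts bag -> is_end adj E -> arises adj tadj r bag E R -> E P ->
  exists K, forall k, K <= k -> CC adj (bag (R b)) E (P k).
Proof.
  intros Hs Hfin He Har HP. destruct (Hfin (R b)) as [LX HLX].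
  apply (tail_CC LX Hs He HP HLX).
  destruct (proj1 Har P HP b) as [L HL].
  destruct (ev_avoid P L (proj1 (end_ray He HP))) as [K HK].
  exists K. intros k Hk Hb. apply (HK k Hk). apply HL. split; eauto.
Qed.

Lemma C_nonempty {V N} {adj : V -> V -> Prop} {tadj : N -> N -> Prop} {bag : N -> V -> Prop} {r R E} b :
  symmetric_rel adj -> finite_parts bag -> is_end adj E -> arises adj tadj r bag E R ->
  exists w, CC adj (bag (R b)) E w.
Proof.
  intros Hs Hfin He Har. destruct He as [R0 [HR0 HE]] eqn:He'.
  assert (E R0) by (apply HE; split; auto; apply ray_equiv_refl; auto).
  destruct (ray_tail_C b Hs Hfin He Har H) as [K HK]. exists (R0 K). apply HK; auto.
Qed.

Lemma N_A {V N} {adj : V -> V -> Prop} {tadj : N -> N -> Prop} {bag : N -> V -> Prop} {r R E b x} :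
  tree_decomposition adj tadj bag -> rooted_ray tadj r R -> arises adj tadj r bag E R ->
  Nb adj bag E R b x -> Aset bag R b x.
Proof.
  intros Htd HR Har [Hb [y [Hy Hxy]]].
  destruct (F2 Htd HR Hxy (CC_U Har Hy)) as [H|H]; auto.
  exfalso. exact (F4 Htd HR Hb H).
Qed.


Lemma lemG {V N} {adj : V -> V -> Prop} {tadj : N -> N -> Prop} {bag : N -> V -> Prop} {r R E} :
  symmetric_rel adj -> tree_decomposition adj tadj bag -> finite_parts bag -> lean adj tadj bag ->
  rooted_ray tadj r R -> is_end adj E -> arises adj tadj r bag E R ->
  forall s, exists j, s <= j /\ forall x, Aset bag R j x -> Nb adj bag E R j x.
Proof.
  intros Hs Htd Hfin Hlean HR He Har s.
  apply NNPP; intro Hno.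
  assert (Hx : forall j, s <= j -> exists x, Aset bag R j x /\ ~ Nb adj bag E R j x).
  { intros j Hj. apply NNPP; intro H. apply Hno. exists j. split; auto.
    intros x Hx. apply NNPP; intro H'. apply H. exists x; auto. }
  assert (Henum : forall b, exists L, NoDup L /\ forall x, In x L <-> Nb adj bag E R b x).
  { intros b. apply enum_fin. destruct (Hfin (R b)) as [L HL]. exists L.
    intros x [Hb _]. auto. }
  set (Q := fun k => exists b L, s <= b /\ NoDup L /\ (forall x, In x L <-> Nb adj bag E R b x)
                                /\ length L = k).
  destruct (Henum s) as [Ls [HLs1 HLs2]].
  destruct (min_nat Q (length Ls)) as [mu [[b0 [L0 [Hb0 [HL0n [HL0 HL0l]]]]] Hmin]].
  { exists s, Ls. auto. }
  assert (Hmin' : forall b L, s <= b -> NoDup L -> (forall x, In x L <-> Nb adj bag E R b x) ->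
                  mu <= length L).
  { intros b L Hb HL1 HL2. apply Hmin. exists b, L. auto. }
  assert (Step1 : forall j, b0 <= j -> ~ card_lt (Aset bag R j) (S mu)).
  { intros j Hj [L' [Hlen Hcov]]. destruct (Hx j) as [y [Hy Hny]]; [lia|].
    destruct (Henum j) as [Lj [HLj1 HLj2]].
    pose proof (Hmin' j Lj ltac:(lia) HLj1 HLj2).
    assert (HN : NoDup (y :: Lj)).
    { constructor; auto. intros Hin. apply HLj2 in Hin. auto. }
    assert (Hinc : incl (y :: Lj) L').
    { intros z [<-|Hz]; apply Hcov; auto. apply HLj2 in Hz. exact (N_A Htd HR Har Hz). }
    pose proof (NoDup_incl_length HN Hinc). simpl in *. lia. }
  assert (Step2 : exists c Zt, b0 <= c /\ NoDup Zt /\ length Zt = S mu /\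
            forall z, In z Zt -> bag (R (S c)) z /\
              (CC adj (bag (R b0)) E z \/ Nb adj bag E R b0 z)).
  { apply NNPP; intro H2.
    assert (Hinc : forall d x, CC adj (bag (R b0)) E x -> CC adj (bag (R (b0 + d))) E x).
    { induction d as [|d IH]; intros x Hx0.
      - rewrite Nat.add_0_r. exact Hx0.
      - rewrite Nat.add_succ_r. set (c := b0 + d) in *.
        apply (CC_transfer Hs He (IH x Hx0)).
        intros z Hz Hbz. apply H2.
        destruct (Henum c) as [Lc [HLc1 HLc2]].
        pose proof (Hmin' c Lc ltac:(unfold c; lia) HLc1 HLc2) as Hm.
        destruct (take_sub Lc mu Hm HLc1) as [L' [HL'1 [HL'2 HL'3]]].
        exists c, (z :: L'). split; [unfold c; lia|]. split; [|split; [simpl; lia|]].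
        + constructor; auto. intros Hin. apply HL'3 in Hin. apply HLc2 in Hin.
          destruct Hin as [Hb _]. exact (proj1 Hz Hb).
        + intros w [<-|Hw].
          * split; auto. left. apply (CC_mono Hs Htd HR He Har (j' := c)); [unfold c; lia|auto].
          * apply HL'3 in Hw. apply HLc2 in Hw. split.
            -- exact (proj2 (N_A Htd HR Har Hw)).
            -- destruct Hw as [Hbw [y [Hy Hwy]]].
               assert (Hy0 : CC adj (bag (R b0)) E y).
               { apply (CC_mono Hs Htd HR He Har (j' := c)); [unfold c; lia|auto]. }
               destruct (classic (bag (R b0) w)) as [Hb|Hb].
               ++ right. split; eauto.
               ++ left. exact (CC_adj Hs Hy0 Hwy Hb). }
    destruct (C_nonempty b0 Hs Hfin He Har) as [w Hw].
    destruct (@F3 _ _ _ _ _ r R w Htd HR) as [M HM].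
    apply (HM (b0 + M)); [lia|]. apply (CC_U Har). apply Hinc. exact Hw. }
  destruct Step2 as [c [Zt [Hc [HZn [HZl HZ]]]]].
  destruct (Hx b0 Hb0) as [y [Hy Hny]].
  assert (HZsn : NoDup (y :: L0)).
  { constructor; auto. intros Hin. apply HL0 in Hin. auto. }
  destruct (Hlean (R b0) (R (S c)) (y :: L0) Zt (S mu) HZsn HZn
              ltac:(simpl; lia) HZl) as [[Ps [HPs HPd]]|Hcut].
  { intros z [<-|Hz]; [exact (proj1 Hy)|]. apply HL0 in Hz. exact (proj1 Hz). }
  { intros z Hz. exact (proj1 (HZ z Hz)). }
  -
    set (st := fun i => hd y (Ps i)).
    assert (Hst : forall i, i < S mu -> In (st i) (Ps i) /\ In (st i) (y :: L0)).
    { intros i Hi. destruct (HPs i Hi) as [a [b [[Hn [Hch [Hh Hl]]] [Ha _]]]].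
      unfold st. destruct (Ps i); simpl in Hh; inversion Hh; subst; simpl; auto. }
    assert (Hex : exists i, i < S mu /\ st i = y).
    { apply NNPP; intro Hne.
      assert (HN : NoDup (map st (seq 0 (S mu)))).
      { apply NoDup_map_seq. intros i j Hi Hj Heq. destruct (Nat.eq_dec i j); auto.
        exfalso. apply (HPd i j (st i)); try lia; auto.
        - apply Hst; lia.
        - rewrite Heq. apply Hst; lia. }
      assert (HI : incl (map st (seq 0 (S mu))) L0).
      { intros z Hz. apply in_map_iff in Hz as [i [<- Hi]]. apply in_seq in Hi.
        destruct (Hst i ltac:(lia)) as [_ [H|H]]; auto.
        exfalso. apply Hne. exists i. split; auto; lia. }
      pose proof (NoDup_incl_length HN HI). rewrite length_map, length_seq in H. lia. }
    destruct Hex as [i [Hi Hsti]].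
    destruct (HPs i Hi) as [a [b [[Hn [Hch [Hh Hl]]] [Ha [Hb [HA HB]]]]]].
    assert (a = y).
    { unfold st in Hsti. destruct (Ps i); simpl in Hh; inversion Hh; subst; simpl in *; auto. }
    subst a.
    assert (HbP : In b (Ps i)).
    { rewrite <- Hl. destruct (Ps i) as [|x l]; [discriminate|].
      clear. revert x; induction l; intros x; simpl; auto. right. apply IHl. }
    destruct (proj2 (HZ b Hb)) as [HCb|HNb].
    + assert (HnCy : ~ CC adj (bag (R b0)) E y).
      { intros [H _]. exact (H (proj1 Hy)). }
      destruct (@cross_list _ adj (fun x => ~ CC adj (bag (R b0)) E x) (Ps i) y Hch Hh HnCy)
        as [p [q [Hp [Hq [Hpq [Hnp Hnq]]]]]].
      { rewrite Hl. tauto. }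
      apply NNPP in Hnq.
      destruct (classic (bag (R b0) p)) as [Hbp|Hbp].
      * assert (HNp : Nb adj bag E R b0 p) by (split; eauto).
        assert (p = y) by (apply HA; auto; right; apply HL0; auto). rewrite H in HNp. exact (Hny HNp).
      * exact (Hnp (CC_adj Hs Hnq Hpq Hbp)).
    + assert (Hby : b = y) by (apply HA; auto; right; apply HL0; auto). apply Hny. rewrite <- Hby. exact HNb.
  -
    destruct (Hcut (map R (seq b0 (S (S c - b0))))) as [k [a [b [Hka [Hkb Hcl]]]]].
    { pose proof (@segpath _ tadj R b0 (S c - b0) (proj1 HR)) as H.
      replace (b0 + (S c - b0)) with (S c) in H by lia. exact H. }
    apply nth_map_seq in Hka. apply nth_map_seq in Hkb. subst a b.
    apply (Step1 (b0 + k)); [lia|]. rewrite Nat.add_succ_r in Hcl. exact Hcl.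
Qed.


Lemma key1 {V N} {adj : V -> V -> Prop} {tadj : N -> N -> Prop} {bag : N -> V -> Prop} {r R E1 E2} :
  symmetric_rel adj -> tree_decomposition adj tadj bag -> finite_parts bag -> lean adj tadj bag ->
  rooted_ray tadj r R -> is_end adj E1 -> is_end adj E2 ->
  arises adj tadj r bag E1 R -> arises adj tadj r bag E2 R ->
  forall P Q, E1 P -> E2 Q -> ray_equiv adj P Q.
Proof.
  intros Hs Htd Hfin Hlean HR He1 He2 Har1 Har2 P Q HP HQ X.
  destruct (@F3L _ _ _ _ _ r R X Htd HR) as [j HM].
  destruct (classic (exists w, CC adj (bag (R j)) E1 w /\ CC adj (bag (R j)) E2 w))
    as [[w [Hw1 Hw2]]|Hno].
  - destruct (proj2 Hw1 P HP) as [n [An Cn]].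
    destruct (proj2 Hw2 Q HQ) as [m [Am Cm]].
    assert (HPk : forall k, n <= k -> CC adj (bag (R j)) E1 (P k)).
    { intros k Hk. apply (CC_conn Hs Hw1). eapply conn_trans; [exact Cn|].
      apply ray_seg; [apply (end_ray He1 HP)|lia|]. intros; apply An; lia. }
    assert (HQk : forall k, m <= k -> CC adj (bag (R j)) E2 (Q k)).
    { intros k Hk. apply (CC_conn Hs Hw2). eapply conn_trans; [exact Cm|].
      apply ray_seg; [apply (end_ray He2 HQ)|lia|]. intros; apply Am; lia. }
    exists n, m. split; [|split].
    + intros k Hk Hin. apply (HM _ Hin j (le_n j)). exact (CC_U Har1 (HPk k Hk)).
    + intros k Hk Hin. apply (HM _ Hin j (le_n j)). exact (CC_U Har2 (HQk k Hk)).
    + apply conn_reach. apply conn_pred with (X := bag (R j)).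
      * eapply conn_trans; [apply conn_sym; [exact Hs|exact Cn]|exact Cm].
      * intros z Hz Hin. apply (HM _ Hin j (le_n j)). apply (CC_U Har1 (E := E1)).
        apply (CC_conn Hs (HPk n (le_n n)) Hz).
  - exfalso.
    destruct (ray_tail_C j Hs Hfin He1 Har1 HP) as [I HI].
    destruct (@F3 _ _ _ _ _ r R (P I) Htd HR) as [M' HM'].
    destruct (lemG Hs Htd Hfin Hlean HR He2 Har2 (Nat.max j M')) as [j2 [Hj2 HA]].
    destruct (ray_tail_C j2 Hs Hfin He1 Har1 HP) as [K HK].
    destruct (last_index (fun k => Uset tadj r bag R j2 (P k)) K I) as [i [Hi [Hni Hai]]].
    { apply HM'. lia. }
    { intros k Hk. exact (CC_U Har1 (HK k Hk)). }
    destruct (F2 Htd HR (proj2 (end_ray He1 HP) i) (Hai (S i) (le_n _))) as [H|H];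
      [contradiction|].
    destruct (HA _ H) as [_ [u [Hu Hzu]]].
    assert (Hu' : CC adj (bag (R j)) E2 u) by (apply (CC_mono Hs Htd HR He2 Har2 (j' := j2)); [lia|auto]).
    pose proof (HI i Hi) as H1.
    apply Hno. exists (P i). split; auto. exact (CC_adj Hs Hu' Hzu (proj1 H1)).
Qed.

Theorem lemma3p5 (V N : Type) (adj : V -> V -> Prop) (tadj : N -> N -> Prop)
  (bag : N -> V -> Prop) (r : N) :
  symmetric_rel adj -> irreflexive_rel adj ->
  tree_decomposition adj tadj bag -> finite_parts bag -> lean adj tadj bag ->
  (forall (R : nat -> N) (E1 E2 : (nat -> V) -> Prop),
      rooted_ray tadj r R -> is_end adj E1 -> is_end adj E2 ->
      arises adj tadj r bag E1 R -> arises adj tadj r bag E2 R ->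
      forall R' : nat -> V, E1 R' <-> E2 R') /\
  (forall (R : nat -> N) (E : (nat -> V) -> Prop),
      rooted_ray tadj r R -> is_end adj E -> arises adj tadj r bag E R ->
      forall v : V, liminf_adh bag R v <-> dominates adj E v).
Proof.
  intros Hs Hirr Htd Hfin Hlean. split.
  - intros R E1 E2 HR He1 He2 Har1 Har2 R'.
    pose proof (key1 Hs Htd Hfin Hlean HR He1 He2 Har1 Har2) as K.
    destruct He1 as [R01 [HR01 HE1]] eqn:He1'.
    destruct He2 as [R02 [HR02 HE2]] eqn:He2'.
    assert (H1 : E1 R01) by (apply HE1; split; auto; apply ray_equiv_refl; auto).
    assert (H2 : E2 R02) by (apply HE2; split; auto; apply ray_equiv_refl; auto).
    split; intros H.
    + apply HE2. split; [exact (end_ray He1 H)|]. apply K; auto.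
    + apply HE1. split; [exact (end_ray He2 H)|]. apply ray_equiv_sym; auto.
  - intros R E HR He Har v. split.
    + intros [n Hn] X HvX. apply CC_compC.
      destruct (@F3L _ _ _ _ _ r R X Htd HR) as [M HM].
      destruct (lemG Hs Htd Hfin Hlean HR He Har (Nat.max n M)) as [j [Hj HA]].
      destruct (HA v (Hn j ltac:(lia))) as [Hb [w [Hw Hvw]]].
      assert (Hw' : CC adj (fun x => In x X) E w).
      { apply (CC_transfer Hs He Hw). intros z Hz Hin. apply (HM z Hin j ltac:(lia)).
        exact (CC_U Har Hz). }
      exact (CC_adj Hs Hw' Hvw HvX).
    + intros Hdom. apply NNPP; intro Hno.
      destruct (@F3 _ _ _ _ _ r R v Htd HR) as [M HM].
      assert (Hi : exists i, M <= i /\ ~ Aset bag R i v).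
      { apply NNPP; intro H. apply Hno. exists M. intros i Hi. apply NNPP; intro H'.
        apply H. exists i. auto. }
      destruct Hi as [i [Hi Hnv]].
      destruct (enum_fin (Aset bag R i)) as [L [_ HL]].
      { destruct (Hfin (R i)) as [L HL]. exists L. intros x [Hx _]. auto. }
      assert (HvL : ~ In v L) by (intros H; apply HL in H; auto).
      destruct (compC_CC (Hdom L HvL)) as [_ Hc].
      destruct He as [R0 [HR0 HE]] eqn:He'.
      assert (H0 : E R0) by (apply HE; split; auto; apply ray_equiv_refl; auto).
      destruct (Hc R0 H0) as [n [An Cn]].
      destruct (ray_tail_C i Hs Hfin He Har H0) as [K HK].
      assert (Hc2 : conn adj (fun x => In x L) v (R0 (Nat.max n K))).
      { eapply conn_trans; [exact Cn|]. apply ray_seg; [exact (proj2 HR0)|lia|].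
        intros; apply An; lia. }
      destruct (conn_cross adj _ (Uset tadj r bag R i) _ _ Hc2) as [p [q [Hp [Hpq [Hnp Hq]]]]].
      { apply HM; auto. }
      { apply (CC_U Har). apply HK. lia. }
      destruct (F2 Htd HR Hpq Hq) as [H|H]; [contradiction|].
      apply Hp. apply HL. exact H.
Qed.
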